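(* Let $K$ be an infinite commutative domain of characteristic $p>0$ and let $R$ be an associative (not necessarily unital) $K$-algebra on which $K$ acts torsion-freely. Then the following are equivalent. (i) $(R,\cdot)$ satisfies a semigroup identity; (ii) $R$ satisfies a binomial identity; (iii) there exist $n\ge0$ and $\alpha_0,\dots,\alpha_n\in K$, not all zero, such that $\sum_{i=0}^n\alpha_i y^ixy^{n-i}=0$ for all $x,y\in R$; (iv) there exists $m\ge1$ such that $y^m e_m y^m=0$ for all $x,y\in R$.
   Context: A semigroup identity is $u=v$ where $u\ne v$ are words in the free semigroup on variables $x,y,x_3,\dots$, holding under all substitutions. A binomial identity is a nontrivial polynomial identity $\alpha_1u_1+\alpha_2u_2=0$ with $u_1,u_2$ monomials and $\alpha_1,\alpha_2\in K$. $[a,b]=ab-ba$, $e_1=[x,y]$, $e_{m+1}=[e_m,y]$. *)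

(* Defs.v *)
From HB Require Import structures.
From mathcomp Require Import all_boot all_order all_algebra.
Set Implicit Arguments. Unset Strict Implicit. Unset Printing Implicit Defensive.
Import GRing.Theory.
Local Open Scope ring_scope.

Definition nu_assoc_alg (K : pzRingType) (R : lmodType K) (mul : R -> R -> R) : Prop :=
  [/\ (forall x y z, mul x (mul y z) = mul (mul x y) z),
      (forall x y z, mul (x + y) z = mul x z + mul y z),
      (forall x y z, mul x (y + z) = mul x y + mul x z),
      (forall (a : K) x y, a *: mul x y = mul (a *: x) y)
    & (forall (a : K) x y, a *: mul x y = mul x (a *: y))].

Definition torsion_free (K : pzRingType) (R : lmodType K) : Prop :=
  forall (a : K) (x : R), a *: x = 0 -> a = 0 \/ x = 0.

Definition infinite_type (T : eqType) : Prop := forall s : seq T, exists x, x \notin s.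

Section Words.
Variables (K : pzRingType) (R : lmodType K) (mul : R -> R -> R).

(* A word in the free semigroup on variables indexed by nat is a nonempty seq nat;
   [evalw f w] is its value under the substitution f. *)
Definition evalw (f : nat -> R) (w : seq nat) : R :=
  if w is a :: t then foldl (fun acc i => mul acc (f i)) (f a) t else 0.

Definition semigroup_identity : Prop :=
  exists u v : seq nat, [/\ u != [::], v != [::], u != v &
    forall f : nat -> R, evalw f u = evalw f v].

(* the polynomial a1 u1 + a2 u2 of the free (non-unital) algebra is nonzero *)
Definition binomial_nontrivial (a1 a2 : K) (u1 u2 : seq nat) : bool :=
  if u1 == u2 then a1 + a2 != 0 else (a1 != 0) || (a2 != 0).

Definition binomial_identity : Prop :=
  exists (a1 a2 : K) (u1 u2 : seq nat),
    [/\ u1 != [::], u2 != [::], binomial_nontrivial a1 a2 u1 u2 &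
      forall f : nat -> R, a1 *: evalw f u1 + a2 *: evalw f u2 = 0].

Definition xy_subst (x y : R) : nat -> R := fun i => if i == 0%N then x else y.

Definition yxy (x y : R) (n i : nat) : R :=
  evalw (xy_subst x y) (nseq i 1%N ++ 0%N :: nseq (n - i) 1%N).

Definition comm (a b : R) : R := mul a b - mul b a.

Fixpoint e_ (x y : R) (m : nat) : R :=
  if m is k.+1 then comm (e_ x y k) y else x.

(* y^m for m >= 1 *)
Definition pw (y : R) (m : nat) : R := iter m.-1 (fun z => mul z y) y.

End Words.

(* Main.v *)
Require Import Defs.
From HB Require Import structures.
From mathcomp Require Import all_boot all_order all_algebra.
From mathcomp Require Import ring zify.
Set Implicit Arguments. Unset Strict Implicit. Unset Printing Implicit Defensive.
Import GRing.Theory.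
Local Open Scope ring_scope.

Section Alg.
Variables (K : pzRingType) (R : lmodType K) (mul : R -> R -> R).
Hypothesis HA : nu_assoc_alg mul.

Lemma mA x y z : mul x (mul y z) = mul (mul x y) z.
Proof. by case: HA. Qed.
Lemma mDl x y z : mul (x + y) z = mul x z + mul y z.
Proof. by case: HA. Qed.
Lemma mDr x y z : mul x (y + z) = mul x y + mul x z.
Proof. by case: HA. Qed.
Lemma mZl (a : K) x y : mul (a *: x) y = a *: mul x y.
Proof. by case: HA => _ _ _ ->. Qed.
Lemma mZr (a : K) x y : mul x (a *: y) = a *: mul x y.
Proof. by case: HA => _ _ _ _ ->. Qed.
Lemma m0l x : mul 0 x = 0.
Proof. by have := mZl 0 0 x; rewrite !scale0r. Qed.
Lemma m0r x : mul x 0 = 0.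
Proof. by have := mZr 0 x 0; rewrite !scale0r. Qed.
Lemma mNl x y : mul (- x) y = - mul x y.
Proof. by rewrite -scaleN1r mZl scaleN1r. Qed.
Lemma mNr x y : mul x (- y) = - mul x y.
Proof. by rewrite -scaleN1r mZr scaleN1r. Qed.
Lemma mBl x y z : mul (x - y) z = mul x z - mul y z.
Proof. by rewrite mDl mNl. Qed.
Lemma mBr x y z : mul x (y - z) = mul x y - mul x z.
Proof. by rewrite mDr mNr. Qed.
Lemma m_suml I (r : seq I) (P : pred I) (F : I -> R) z :
  mul (\sum_(i <- r | P i) F i) z = \sum_(i <- r | P i) mul (F i) z.
Proof. exact: (big_morph (fun v => mul v z) (fun u v => mDl u v z) (m0l z)). Qed.
Lemma m_sumr I (r : seq I) (P : pred I) (F : I -> R) z :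
  mul z (\sum_(i <- r | P i) F i) = \sum_(i <- r | P i) mul z (F i).
Proof. exact: (big_morph (fun v => mul z v) (fun u v => mDr z u v) (m0r z)). Qed.

Definition lpow (y : R) (k : nat) (v : R) := iter k (mul y) v.
Definition rpow (y : R) (k : nat) (v : R) := iter k (fun z => mul z y) v.
Arguments lpow : simpl never.
Arguments rpow : simpl never.
Definition sw (x y : R) (i j : nat) := rpow y j (lpow y i x).

Lemma lpowS y k v : lpow y k.+1 v = mul y (lpow y k v). Proof. by []. Qed.
Lemma rpowS y k v : rpow y k.+1 v = mul (rpow y k v) y. Proof. by []. Qed.
Lemma lpowSr y k v : lpow y k.+1 v = lpow y k (mul y v).
Proof. by rewrite /lpow iterSr. Qed.
Lemma rpowSr y k v : rpow y k.+1 v = rpow y k (mul v y).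
Proof. by rewrite /rpow iterSr. Qed.
Lemma lpowD y i j v : lpow y (i + j) v = lpow y i (lpow y j v).
Proof. by rewrite /lpow iterD. Qed.
Lemma rpowD y i j v : rpow y (i + j) v = rpow y i (rpow y j v).
Proof. by rewrite /rpow iterD. Qed.
Lemma lpow_rpow y i j v : lpow y i (rpow y j v) = rpow y j (lpow y i v).
Proof.
elim: i v => [|i IH] v; first by [].
rewrite !lpowS IH; move: (lpow y i v) => w.
elim: j {IH} => [|j IHj] //; by rewrite !rpowS mA IHj.
Qed.
Lemma lpowDv y k u v : lpow y k (u + v) = lpow y k u + lpow y k v.
Proof. by elim: k => // k IH; rewrite !lpowS IH mDr. Qed.
Lemma rpowDv y k u v : rpow y k (u + v) = rpow y k u + rpow y k v.
Proof. by elim: k => // k IH; rewrite !rpowS IH mDl. Qed.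
Lemma lpowZ y k (a : K) v : lpow y k (a *: v) = a *: lpow y k v.
Proof. by elim: k => // k IH; rewrite !lpowS IH mZr. Qed.
Lemma rpowZ y k (a : K) v : rpow y k (a *: v) = a *: rpow y k v.
Proof. by elim: k => // k IH; rewrite !rpowS IH mZl. Qed.
Lemma lpow0 y k : lpow y k 0 = 0.
Proof. by elim: k => // k IH; rewrite lpowS IH m0r. Qed.
Lemma rpow0 y k : rpow y k 0 = 0.
Proof. by elim: k => // k IH; rewrite rpowS IH m0l. Qed.
Lemma lpowN y k v : lpow y k (- v) = - lpow y k v.
Proof. by rewrite -scaleN1r lpowZ scaleN1r. Qed.
Lemma rpowN y k v : rpow y k (- v) = - rpow y k v.
Proof. by rewrite -scaleN1r rpowZ scaleN1r. Qed.
Lemma lpowB y k u v : lpow y k (u - v) = lpow y k u - lpow y k v.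
Proof. by rewrite lpowDv lpowN. Qed.
Lemma rpowB y k u v : rpow y k (u - v) = rpow y k u - rpow y k v.
Proof. by rewrite rpowDv rpowN. Qed.
Lemma lpow_sum y k I (r : seq I) (P : pred I) (F : I -> R) :
  lpow y k (\sum_(i <- r | P i) F i) = \sum_(i <- r | P i) lpow y k (F i).
Proof. exact: (big_morph (lpow y k) (lpowDv y k) (lpow0 y k)). Qed.
Lemma rpow_sum y k I (r : seq I) (P : pred I) (F : I -> R) :
  rpow y k (\sum_(i <- r | P i) F i) = \sum_(i <- r | P i) rpow y k (F i).
Proof. exact: (big_morph (rpow y k) (rpowDv y k) (rpow0 y k)). Qed.

Lemma rpow_lpow_y y k : rpow y k y = lpow y k y.
Proof.
elim: k => // k IH; rewrite rpowS IH.
have -> : mul (lpow y k y) y = rpow y 1 (lpow y k y) by [].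
by rewrite -lpow_rpow lpowSr.
Qed.
Lemma mul_lpow_y y k v : mul (lpow y k y) v = lpow y k.+1 v.
Proof.
rewrite lpowSr; elim: k v => // k IH v; by rewrite lpowS -mA IH -lpowS -lpowSr lpowS.
Qed.
Lemma mul_rpow_y y k v : mul v (rpow y k y) = rpow y k.+1 v.
Proof.
rewrite rpowSr; elim: k v => // k IH v; by rewrite rpowS mA IH -rpowS -rpowSr rpowS.
Qed.
Lemma pwE y m : pw mul y m = rpow y m.-1 y. Proof. by []. Qed.
Lemma mul_pw_l y m v : (0 < m)%N -> mul (pw mul y m) v = lpow y m v.
Proof. by case: m => // m _; rewrite pwE rpow_lpow_y mul_lpow_y. Qed.
Lemma mul_pw_r y m v : (0 < m)%N -> mul v (pw mul y m) = rpow y m v.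
Proof. by case: m => // m _; rewrite pwE mul_rpow_y. Qed.

Lemma foldl_nseq (f : nat -> R) a j z :
  foldl (fun acc i => mul acc (f i)) z (nseq j a) = rpow (f a) j z.
Proof. by elim: j z => // j IH z; rewrite rpowSr -IH. Qed.

Lemma evalw_nseq (f : nat -> R) a b i j :
  evalw mul f (nseq i a ++ b :: nseq j a) = sw (f b) (f a) i j.
Proof.
case: i => [|i] /=; first by rewrite foldl_nseq.
rewrite foldl_cat foldl_nseq /= foldl_nseq /sw; congr rpow.
by rewrite rpow_lpow_y mul_lpow_y.
Qed.

Lemma yxyE x y n i : yxy mul x y n i = sw x y i (n - i).
Proof. by rewrite /yxy evalw_nseq. Qed.

Lemma sw_mulr x y i j : mul (sw x y i j) y = sw x y i j.+1.
Proof. by []. Qed.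
Lemma sw_mull x y i j : mul y (sw x y i j) = sw x y i.+1 j.
Proof. rewrite /sw lpowS; exact: (lpow_rpow y 1 j (lpow y i x)). Qed.

Lemma e_expand x y m : e_ mul x y m =
  \sum_(k < m.+1) ((-1) ^+ k * ('C(m, k))%:R) *: sw x y k (m - k).
Proof.
elim: m => [|m IH]; first by rewrite big_ord1 /= mul1r scale1r.
rewrite /= /comm IH m_suml m_sumr.
rewrite (eq_bigr (fun k : 'I_m.+1 => ((-1)^+k * 'C(m,k)%:R) *: sw x y k (m - k).+1));
  last by move=> k _; rewrite mZl.
rewrite [X in _ - X](eq_bigr (fun k : 'I_m.+1 => ((-1)^+k * 'C(m,k)%:R) *: sw x y k.+1 (m - k)));
  last by move=> k _; rewrite mZr sw_mull.
rewrite [in RHS]big_ord_recl /= expr0 mul1r bin0 scale1r subn0.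
rewrite [X in _ = _ + X](eq_bigr (fun k : 'I_m.+1 =>
   ((-1)^+k.+1 * 'C(m,k.+1)%:R) *: sw x y k.+1 (m - k) +
   ((-1)^+k.+1 * 'C(m,k)%:R) *: sw x y k.+1 (m - k))); last first.
  by move=> k _; rewrite /bump /= binS natrD mulrDr scalerDl.
rewrite big_split /= addrA; congr (_ + _).
  rewrite [in RHS]big_ord_recr /= bin_small // mulr0 scale0r addr0.
  rewrite big_ord_recl /= expr0 mul1r bin0 scale1r subn0; congr (_ + _).
  apply: eq_bigr => k _; congr (_ *: sw _ _ _ _); rewrite /bump /=.
  have := ltn_ord k; lia.
rewrite -sumrN; apply: eq_bigr => k _.
by rewrite exprS mulN1r mulNr scaleNr.
Qed.

End Alg.
Arguments lpow : simpl never.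
Arguments rpow : simpl never.
Arguments sw : simpl never.

Lemma big_delta (V : nmodType) M m (F : nat -> V) : (m < M)%N ->
  \sum_(k < M) (if nat_of_ord k == m then F k else 0) = F m.
Proof.
move=> Hm; rewrite (bigD1 (Ordinal Hm)) //= eqxx big1 ?addr0 // => k.
by rewrite -val_eqE /= => /negPf ->.
Qed.

Section Binom.
Variables (K : idomainType) (p : nat).
Hypothesis Hp : p \in [pchar K].

Lemma pnat_pow r : [pchar {poly K}].-nat (p ^ r)%N.
Proof.
have pr := pcharf_prime Hp.
rewrite pnatX (pnatE _ pr); apply/orP; left; by rewrite pchar_poly.
Qed.
Lemma pnat_powK r : [pchar K].-nat (p ^ r)%N.
Proof.
have pr := pcharf_prime Hp.
rewrite pnatX (pnatE _ pr); apply/orP; left; by [].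
Qed.

Lemma binq0 r k : (0 < k < (p ^ r)%N)%N -> ('C((p ^ r)%N, k)%:R : K) = 0.
Proof.
move=> /andP [k0 kq].
have HQ : (1 + 'X : {poly K}) ^+ (p ^ r)%N = 1 + 'X ^+ (p ^ r)%N.
  by rewrite exprDn_pchar ?expr1n //; exact: pnat_pow.
have := congr1 (fun q : {poly K} => q`_k) HQ.
rewrite exprDn coef_sum coefD coefC coefXn.
rewrite (_ : (k == 0)%N = false); last by case: k k0 kq.
rewrite (_ : (k == (p ^ r)%N)%N = false); last by rewrite ltn_eqF.
rewrite addr0 => <-.
rewrite (eq_bigr (fun i : 'I_(p ^ r)%N.+1 => if nat_of_ord i == k then ('C((p ^ r)%N, i)%:R : K) else 0)).
  by rewrite (big_delta (fun i => ('C((p ^ r)%N, i)%:R : K))) // ltnS ltnW.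
move=> i _; rewrite expr1n mul1r coefMn coefXn eq_sym.
by case: eqP => _; rewrite ?mul0rn // mulr1n.
Qed.

Lemma signq r : (-1 : K) ^+ (p ^ r)%N = -1.
Proof.
have pr := pcharf_prime Hp.
have q0 : (0 < (p ^ r)%N)%N by rewrite expn_gt0 prime_gt0.
have := exprDn_pchar 1 (-1 : K) (pnat_powK r).
rewrite subrr expr0n expr1n (_ : ((p ^ r)%N == 0)%N = false) ?(gtn_eqF q0) //= => /esym/eqP.
by rewrite addrC addr_eq0 => /eqP.
Qed.

Lemma binq1 r b : (b < (p ^ r)%N)%N -> ('C((p ^ r)%N.-1, b)%:R : K) = (-1) ^+ b.
Proof.
have pr := pcharf_prime Hp.
have q0 : (0 < (p ^ r)%N)%N by rewrite expn_gt0 prime_gt0.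
elim: b => [|b IH] Hb; first by rewrite bin0 expr0.
have := @binq0 r b.+1; rewrite Hb /= => /(_ isT).
rewrite -{1}(prednK q0) binS natrD IH ?(ltnW Hb) // => /eqP.
by rewrite addr_eq0 => /eqP ->; rewrite exprS mulN1r.
Qed.

Lemma binq2 r c b : (1 <= c)%N -> (c <= b)%N -> (b < (p ^ r)%N)%N ->
  ('C((p ^ r)%N.-1 + c, b)%:R : K) = 0.
Proof.
have pr := pcharf_prime Hp.
have q0 : (0 < (p ^ r)%N)%N by rewrite expn_gt0 prime_gt0.
elim: c b => [|c IH] b // _ cb bq.
case: c IH cb => [|c] IH cb.
  by rewrite addn1 prednK // binq0 // bq andbT; lia.
case: b cb bq => [|b] cb bq; first by [].
rewrite addnS binS natrD IH ?IH ?addr0 //; lia.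
Qed.

End Binom.



Section Van.
Variables (K : idomainType) (R : lmodType K).
Hypothesis Hinf : infinite_type K.
Hypothesis Htf : torsion_free R.

Definition pev N (c : nat -> R) (l : K) : R := \sum_(k < N) l ^+ k *: c k.

Lemma uniq_seq N : exists s : seq K, uniq s /\ size s = N.
Proof.
elim: N => [|N [s [us ss]]]; first by exists [::].
have [z zs] := Hinf s; exists (z :: s); by rewrite /= zs us ss.
Qed.

Lemma VAN N c : (forall l, pev N c l = 0) -> forall k, (k < N)%N -> c k = 0.
Proof.
move=> H k kN.
have [s [us ss]] := uniq_seq N.
pose a : 'rV[K]_N := \row_j s`_j.
pose A := (Vandermonde N a)^T.
have dA : \det A != 0.
  rewrite det_tr det_Vandermonde; apply/prodf_neq0 => i _; apply/prodf_neq0 => j ij.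
  rewrite !mxE subr_eq0; apply/negP => /eqP /(congr1 (index^~ s)).
  rewrite !index_uniq ?ss // => /val_inj E; by move: ij; rewrite E ltnn.
have HA : forall i : 'I_N, \sum_(j < N) A i j *: c j = 0.
  move=> i; rewrite -[RHS](H (s`_i)) /pev; apply: eq_bigr => j _; by rewrite !mxE.
have : \sum_(j < N) ((\adj A *m A) (Ordinal kN) j) *: c j = 0.
  under eq_bigr do rewrite mxE scaler_suml.
  rewrite exchange_big /=; apply: big1 => i _.
  under eq_bigr do rewrite -scalerA.
  by rewrite -scaler_sumr HA scaler0.
rewrite mul_adj_mx.
under eq_bigr do rewrite mxE eq_sym.
rewrite (eq_bigr (fun j : 'I_N => if nat_of_ord j == k then \det A *: c j else 0)); last first.
  move=> j _; have -> : (j == Ordinal kN) = (nat_of_ord j == k) by rewrite -val_eqE.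
  by case: eqP => _; rewrite ?mulr1n ?mulr0n ?scale0r.
rewrite (big_delta (fun j => \det A *: c j)) // => /Htf [/eqP|//].
by rewrite (negPf dA).
Qed.

End Van.


Section Four.
Variables (K : idomainType) (R : lmodType K) (mul : R -> R -> R).
Hypothesis HA : nu_assoc_alg mul.

Definition Zp a k b := forall x y : R, rpow mul y b (lpow mul y a (e_ mul x y k)) = 0.

Lemma Zp_ab a k b a' b' : Zp a k b -> (a <= a')%N -> (b <= b')%N -> Zp a' k b'.
Proof.
move=> Z aa bb x y.
by rewrite -(subnK aa) -(subnK bb) lpowD rpowD -(lpow_rpow HA) Z (lpow0 HA) (rpow0 HA).
Qed.

Lemma Zp_k a k b : Zp a k b -> Zp a k.+1 b.
Proof.
move=> Z x y; rewrite /= /comm.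
have -> : mul (e_ mul x y k) y = rpow mul y 1 (e_ mul x y k) by [].
have -> : mul y (e_ mul x y k) = lpow mul y 1 (e_ mul x y k) by [].
rewrite lpowB // rpowB // -lpowD lpow_rpow // -rpowD.
rewrite (Zp_ab Z (leqnn a) (leq_addr 1 b)) (Zp_ab Z (leq_addr 1 a) (leqnn b)).
by rewrite subrr.
Qed.

Lemma Zp_mono a k b a' k' b' : Zp a k b -> (a <= a')%N -> (k <= k')%N -> (b <= b')%N ->
  Zp a' k' b'.
Proof.
move=> Z aa kk bb; apply: (Zp_ab (a := a) (b := b)) => //.
rewrite -(subnK kk); elim: (k' - k)%N => [|n IH] //.
by rewrite addSn; apply: Zp_k.
Qed.

Lemma iv_Zp m : (1 <= m)%N ->
  (forall x y : R, mul (mul (pw mul y m) (e_ mul x y m)) (pw mul y m) = 0) <-> Zp m m m.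
Proof.
move=> m1; split=> H x y; move: (H x y); by rewrite mul_pw_r // mul_pw_l.
Qed.

Lemma e_Q (Q : nat) x y : (0 < Q)%N -> (forall k, (0 < k < Q)%N -> ('C(Q, k)%:R : K) = 0) ->
  (-1 : K) ^+ Q = -1 ->
  e_ mul x y Q = sw mul x y 0 Q - sw mul x y Q 0.
Proof.
case: Q => [//|Q] _ HC Hs.
rewrite e_expand // big_ord_recl big_ord_recr /= big1 ?add0r.
  rewrite expr0 mul1r bin0 scale1r subn0 Hs binn mulr1 subnn scaleN1r.
  by rewrite addrC.
move=> i _; rewrite HC ?mulr0 ?scale0r //= /bump /=; have := ltn_ord i; lia.
Qed.

End Four.


Section Five.
Variables (K : idomainType) (R : lmodType K) (mul : R -> R -> R) (p : nat).
Hypothesis HA : nu_assoc_alg mul.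
Hypothesis Hp : p \in [pchar K].

Lemma iv_i m : (1 <= m)%N ->
  (forall x y : R, mul (mul (pw mul y m) (e_ mul x y m)) (pw mul y m) = 0) ->
  semigroup_identity mul.
Proof.
move=> m1 /(iv_Zp HA m1) Z.
have pr := pcharf_prime Hp.
set Q := (p ^ m)%N.
have mQ : (m < Q)%N by apply: ltn_expl; exact: prime_gt1.
have q0 : (0 < Q)%N by lia.
have ZQ : Zp mul Q Q Q by apply: (Zp_mono HA Z); lia.
exists (nseq Q 1%N ++ 0%N :: nseq (Q + Q) 1%N), (nseq (Q + Q) 1%N ++ 0%N :: nseq Q 1%N).
split.
- by case: (nseq Q 1%N).
- by case: (nseq (Q + Q) 1%N).
- apply/eqP => /(congr1 (fun s => nth 0%N s Q)).
  rewrite !nth_cat !size_nseq ltnn subnn /= nth_nseq; have -> : (Q < Q + Q)%N by lia. by [].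
move=> f; rewrite !evalw_nseq //.
have := ZQ (f 0%N) (f 1%N).
rewrite (e_Q HA) //; last first.
- exact: signq.
- by move=> k kq; apply: binq0.
rewrite (lpowB HA) (rpowB HA) => /eqP; rewrite subr_eq0 => /eqP.
rewrite /sw (lpow_rpow HA) -rpowD -!lpowD /=.
by rewrite (_ : (Q + 0)%N = Q) ?addn0.
Qed.

Lemma i_ii : semigroup_identity mul -> binomial_identity mul.
Proof.
move=> [u [v [u0 v0 uv H]]].
exists 1, (-1), u, v; split => //.
  by rewrite /binomial_nontrivial (negPf uv) oner_neq0.
by move=> f; rewrite H scale1r scaleN1r subrr.
Qed.

End Five.


Section PevLemmas.
Variables (K : idomainType) (R : lmodType K).

Definition supp (c : nat -> R) N := forall k, (N <= k)%N -> c k = 0.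

Lemma pev_widen N M (c : nat -> R) l : supp c N -> (N <= M)%N -> pev N c l = pev M c l.
Proof.
move=> S NM; rewrite /pev -(subnKC NM) big_split_ord /= [X in _ = _ + X]big1 ?addr0 //.
by move=> k _; rewrite S ?scaler0 // leq_addr.
Qed.

Lemma pevD N (c1 c2 : nat -> R) l : pev N (fun k => c1 k + c2 k) l = pev N c1 l + pev N c2 l.
Proof. by rewrite /pev -big_split; apply: eq_bigr => k _; rewrite scalerDr. Qed.

Lemma pevZ N (c : nat -> R) (a : K) l : pev N (fun k => a *: c k) l = a *: pev N c l.
Proof. by rewrite /pev scaler_sumr; apply: eq_bigr => k _; rewrite !scalerA mulrC. Qed.

Lemma pev_delta N m (v : R) l : (m < N)%N -> pev N (fun k => (k == m)%:R *: v) l = l ^+ m *: v.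
Proof.
move=> mN; rewrite /pev (eq_bigr (fun k : 'I_N => if nat_of_ord k == m then l ^+ k *: v else 0)).
  by rewrite (big_delta (fun k => l ^+ k *: v)).
by move=> k _; case: eqP => _; rewrite ?scale1r ?scale0r ?scaler0.
Qed.

End PevLemmas.

Section Lin.
Variables (K : idomainType) (R : lmodType K) (mul : R -> R -> R).
Hypothesis HA : nu_assoc_alg mul.

Definition fl (x y : R) (a : nat) (l : K) : nat -> R := fun i => if i == a then y + l *: x else y.
Definition stp (x y : R) (a : nat) (c : nat -> R) (i : nat) : nat -> R :=
  fun k => mul (c k) y + (if i == a then (if k is k'.+1 then mul (c k') x else 0) else 0).
Definition ini (x y : R) (a h : nat) : nat -> R :=
  fun k => if k == 0%N then y else if k == 1%N then (h == a)%:R *: x else 0.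
Definition cf x y a (w : seq nat) : nat -> R :=
  if w is h :: t then foldl (stp x y a) (ini x y a h) t else fun _ => 0.
Definition Lw x y a (w : seq nat) : R :=
  \sum_(j < size w) (nth 0%N w j == a)%:R *: sw mul x y j ((size w).-1 - j).

Lemma stp_pev x y a c N l i : supp c N ->
  mul (pev N c l) (fl x y a l i) = pev N.+1 (stp x y a c i) l.
Proof.
move=> S.
have E1 : \sum_(k < N.+1) l ^+ k *: mul (c k) y = mul (pev N c l) y.
  rewrite big_ord_recr /= S // (m0l HA) scaler0 addr0 /pev (m_suml HA).
  by apply: eq_bigr => k _; rewrite (mZl HA).
have E2 : \sum_(k < N.+1) l ^+ k *: (if nat_of_ord k is k'.+1 then mul (c k') x else 0)
    = l *: mul (pev N c l) x.
  rewrite big_ord_recl /= scaler0 add0r /pev (m_suml HA) scaler_sumr.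
  by apply: eq_bigr => k _; rewrite (mZl HA) scalerA exprS.
rewrite [RHS]/pev /stp; under eq_bigr do rewrite scalerDr.
rewrite big_split /= E1 /fl; case: (i == a).
  by rewrite E2 (mDr HA) (mZr HA).
by rewrite big1 ?addr0 // => k _; rewrite scaler0.
Qed.

Lemma stp_supp x y a c N i : supp c N -> supp (stp x y a c i) N.+1.
Proof.
move=> S [|k] Nk //; rewrite /stp S ?(m0l HA) ?add0r; last by apply: ltnW.
by case: (i == a) => //; rewrite S ?(m0l HA).
Qed.

Lemma foldl_pev x y a l t : forall c N, supp c N ->
  foldl (fun acc i => mul acc (fl x y a l i)) (pev N c l) t
    = pev (N + size t) (foldl (stp x y a) c t) l /\
  supp (foldl (stp x y a) c t) (N + size t).
Proof.
elim: t => [|i t IH] c N S /=; first by rewrite addn0.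
rewrite stp_pev // addnS -addSn; exact: IH (stp_supp _ _ _ _ S).
Qed.

Lemma evalw_pev x y a l w : w != [::] ->
  evalw mul (fl x y a l) w = pev (size w).+1 (cf x y a w) l /\ supp (cf x y a w) (size w).+1.
Proof.
case: w => [//|h t] _ /=.
have -> : fl x y a l h = pev 2 (ini x y a h) l.
  rewrite /pev big_ord_recr big_ord_recr big_ord0 /= add0r expr0 expr1 scale1r /ini /fl /=.
  by case: (h == a); rewrite ?scale1r ?scale0r ?scaler0 ?addr0.
have S : supp (ini x y a h) 2 by move=> [|[|k]] //.
have := foldl_pev x y a l t S; by rewrite add2n.
Qed.

Lemma foldl_stp01 x y a t : forall c,
  (foldl (stp x y a) c t) 0%N = rpow mul y (size t) (c 0%N) /\
  (foldl (stp x y a) c t) 1%N = rpow mul y (size t) (c 1%N) +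
     \sum_(j < size t) (nth 0%N t j == a)%:R *:
        rpow mul y ((size t).-1 - j) (mul (rpow mul y j (c 0%N)) x).
Proof.
elim: t => [|i t IH] c /=; first by rewrite big_ord0 addr0.
have [IH0 IH1] := IH (stp x y a c i).
rewrite IH0 IH1 /stp if_same addr0 -rpowSr; split => //.
rewrite (rpowDv HA) -rpowSr -addrA; congr (_ + _).
rewrite big_ord_recl /=; congr (_ + _).
  rewrite subn0; case: (i == a); by rewrite ?scale1r ?scale0r ?(rpow0 HA).
apply: eq_bigr => j _; rewrite /bump /= add1n -rpowSr; congr (_ *: rpow _ _ _ _).
have := ltn_ord j; lia.
Qed.

Lemma cf1 x y a w : w != [::] -> cf x y a w 1%N = Lw x y a w.
Proof.
case: w => [//|h t] _; rewrite /cf /Lw.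
have [_ ->] := foldl_stp01 x y a t (ini x y a h).
rewrite /= big_ord_recl /= subn0; congr (_ + _).
  by rewrite /ini /= (rpowZ HA).
apply: eq_bigr => j _; rewrite /ini /= (rpow_lpow_y HA) (mul_lpow_y HA) /sw /bump /=.
congr (_ *: rpow _ _ _ _); have := ltn_ord j; lia.
Qed.

Lemma lpow_scale (m : K) y i v : lpow mul (m *: y) i v = m ^+ i *: lpow mul y i v.
Proof.
elim: i => [|i IH]; first by rewrite expr0 scale1r.
by rewrite !lpowS IH (mZl HA) (mZr HA) scalerA exprS.
Qed.
Lemma rpow_scale (m : K) y i v : rpow mul (m *: y) i v = m ^+ i *: rpow mul y i v.
Proof.
elim: i => [|i IH]; first by rewrite expr0 scale1r.
by rewrite !rpowS IH (mZl HA) (mZr HA) scalerA exprSr.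
Qed.
Lemma sw_scale (m : K) x y i j : sw mul x (m *: y) i j = m ^+ (i + j) *: sw mul x y i j.
Proof. by rewrite /sw rpow_scale lpow_scale (rpowZ HA) scalerA -exprD addnC. Qed.

Lemma Lw_scale (m : K) x y a w : Lw x (m *: y) a w = m ^+ (size w).-1 *: Lw x y a w.
Proof.
rewrite /Lw scaler_sumr; apply: eq_bigr => j _.
rewrite sw_scale !scalerA mulrC; congr ((_ ^+ _ * _) *: _).
have := ltn_ord j; lia.
Qed.

End Lin.


Section Seven.
Variables (K : idomainType) (R : lmodType K) (mul : R -> R -> R).
Hypothesis HA : nu_assoc_alg mul.
Hypothesis Hinf : infinite_type K.
Hypothesis Htf : torsion_free R.

Definition iii_prop := exists (n : nat) (alpha : 'I_n.+1 -> K),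
        (exists i, alpha i != 0) /\
        forall x y : R, \sum_(i < n.+1) alpha i *: yxy mul x y n i = 0.

Lemma lin_part a1 a2 u1 u2 : u1 != [::] -> u2 != [::] ->
  (forall f, a1 *: evalw mul f u1 + a2 *: evalw mul f u2 = 0) ->
  forall x y a, a1 *: Lw mul x y a u1 + a2 *: Lw mul x y a u2 = 0.
Proof.
move=> n1 n2 H x y a.
pose M := (size u1 + size u2).+2.
pose c k := a1 *: cf mul x y a u1 k + a2 *: cf mul x y a u2 k.
have : c 1%N = 0.
  apply: (VAN Hinf Htf (N := M)) => // l.
  have [E1 S1] := evalw_pev HA x y a l n1.
  have [E2 S2] := evalw_pev HA x y a l n2.
  have := H (fl x y a l); rewrite E1 E2 (pev_widen l S1 (_ : _ <= M)%N); last by rewrite /M; lia.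
  rewrite (pev_widen l S2 (_ : _ <= M)%N); last by rewrite /M; lia.
  by rewrite /c pevD !pevZ.
by rewrite /c !(cf1 HA).
Qed.

Lemma iii_of n (b : nat -> K) j0 : (j0 <= n)%N -> b j0 != 0 ->
  (forall x y : R, \sum_(j < n.+1) b j *: sw mul x y j (n - j) = 0) -> iii_prop.
Proof.
move=> jn bj H; exists n, (fun i : 'I_n.+1 => b i); split.
  by exists (Ordinal (jn : j0 < n.+1)%N).
by move=> x y; rewrite -[RHS](H x y); apply: eq_bigr => i _; rewrite yxyE.
Qed.

Lemma single c w a : w != [::] -> c != 0 -> a = nth 0%N w 0 ->
  (forall x y, c *: Lw mul x y a w = 0) -> iii_prop.
Proof.
move=> nw c0 Ea H.
have sw0 : (0 < size w)%N by case: (w) nw.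
apply: (@iii_of (size w).-1 (fun j => c * (nth 0%N w j == a)%:R) 0%N) => //.
  by rewrite Ea eqxx mulr1.
move=> x y; rewrite -[RHS](H x y) /Lw scaler_sumr (prednK sw0).
by apply: eq_bigr => j _; rewrite scalerA.
Qed.

Lemma ii_iii : binomial_identity mul -> iii_prop.
Proof.
move=> [a1 [a2 [u1 [u2 [n1 n2 nt H]]]]].
have L := lin_part n1 n2 H.
have s1 : (0 < size u1)%N by case: (u1) n1.
have s2 : (0 < size u2)%N by case: (u2) n2.
case: (eqVneq (size u1) (size u2)) => [Ed|Nd].
  have key : forall a x y, \sum_(j < (size u1).-1.+1)
      (a1 * (nth 0%N u1 j == a)%:R + a2 * (nth 0%N u2 j == a)%:R) *:
        sw mul x y j ((size u1).-1 - j) = 0.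
    move=> a x y; rewrite -[RHS](L x y a) /Lw -Ed (prednK s1) !scaler_sumr -big_split.
    by apply: eq_bigr => j _; rewrite scalerDl !scalerA.
  case: (eqVneq u1 u2) => [E|NE].
    move: nt; rewrite /binomial_nontrivial E eqxx => nt.
    apply: (@iii_of (size u1).-1 (fun j => a1 * (nth 0%N u1 j == nth 0%N u2 0)%:R +
       a2 * (nth 0%N u2 j == nth 0%N u2 0)%:R) 0%N) => //.
    by rewrite /= E eqxx !mulr1.
  have [j0 j0s Dj] : exists2 j0, (j0 < size u1)%N & nth 0%N u1 j0 != nth 0%N u2 j0.
    case: (boolP [exists j : 'I_(size u1), nth 0%N u1 j != nth 0%N u2 j]) => [/existsP [j Hj]|/existsPn Hn].
      by exists j.
    exfalso; move/eqP: NE; apply; apply: (eq_from_nth (x0 := 0%N) Ed) => i Hi.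
    by have := Hn (Ordinal Hi); rewrite negbK => /eqP.
  have j0n : (j0 <= (size u1).-1)%N by lia.
  move: nt; rewrite /binomial_nontrivial (negPf NE) => /orP [a1n | a2n].
    apply: (@iii_of (size u1).-1 (fun j => a1 * (nth 0%N u1 j == nth 0%N u1 j0)%:R +
       a2 * (nth 0%N u2 j == nth 0%N u1 j0)%:R) j0) => //.
    by rewrite /= eqxx (eq_sym (nth 0%N u2 j0)) (negPf Dj) mulr1 mulr0 addr0.
  apply: (@iii_of (size u1).-1 (fun j => a1 * (nth 0%N u1 j == nth 0%N u2 j0)%:R +
     a2 * (nth 0%N u2 j == nth 0%N u2 j0)%:R) j0) => //.
  by rewrite /= eqxx (negPf Dj) mulr1 mulr0 add0r.
have key2 : forall x y a, a1 *: Lw mul x y a u1 = 0 /\ a2 *: Lw mul x y a u2 = 0.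
  move=> x y a.
  pose c k := (k == (size u1).-1)%:R *: (a1 *: Lw mul x y a u1) +
              (k == (size u2).-1)%:R *: (a2 *: Lw mul x y a u2).
  have HM : forall l : K, pev (size u1 + size u2) c l = 0.
    move=> l; rewrite /c pevD !pev_delta; [|lia|lia].
    have := L x (l *: y) a; rewrite !(Lw_scale HA) !scalerA.
    by rewrite (mulrC a1) (mulrC a2).
  have V1 := VAN Hinf Htf HM (_ : (size u1).-1 < size u1 + size u2)%N.
  have V2 := VAN Hinf Htf HM (_ : (size u2).-1 < size u1 + size u2)%N.
  have ne : ((size u1).-1 == (size u2).-1) = false.
    by apply/negP => /eqP E; move: Nd; rewrite -(prednK s1) -(prednK s2) E eqxx.
  split.
    by have := V1 ltac:(lia); rewrite /c eqxx ne scale1r scale0r addr0.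
  by have := V2 ltac:(lia); rewrite /c eqxx eq_sym ne scale1r scale0r add0r.
have NE : u1 != u2 by apply/negP => /eqP E; move: Nd; rewrite E eqxx.
move: nt; rewrite /binomial_nontrivial (negPf NE) => /orP [a1n | a2n].
  by apply: (@single a1 u1 (nth 0%N u1 0)) => // x y; case: (key2 x y (nth 0%N u1 0)).
by apply: (@single a2 u2 (nth 0%N u2 0)) => // x y; case: (key2 x y (nth 0%N u2 0)).
Qed.

End Seven.


Lemma sum_widen (V : nmodType) (F : nat -> V) n m : (n <= m)%N ->
  (forall k, (n <= k)%N -> (k < m)%N -> F k = 0) ->
  \sum_(k < n) F k = \sum_(k < m) F k.
Proof.
move=> nm H; rewrite -(subnKC nm) big_split_ord /= [X in _ = _ + X]big1 ?addr0 //.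
move=> k _; apply: H; first by rewrite leq_addr.
by have := ltn_ord k; lia.
Qed.


Section Eight.
Variables (K : comPzRingType) (R : lmodType K) (mul : R -> R -> R).
Hypothesis HA : nu_assoc_alg mul.

Lemma lpowY (y : R) (l : K) i v : lpow mul (y + l *: mul y y) i v =
  \sum_(a < i.+1) ('C(i, a)%:R * l ^+ a) *: lpow mul y (i + a) v.
Proof.
elim: i v => [|i IH] v.
  by rewrite big_ord1 /= bin0 expr0 mulr1 scale1r.
rewrite lpowS IH (mDl HA) (mZl HA) !(m_sumr HA).
rewrite [in RHS]big_ord_recl /= bin0 expr0 mulr1 scale1r.
under [X in _ = _ + X]eq_bigr do rewrite /bump /= binS natrD mulrDl scalerDl.
rewrite big_split /= addrA; congr (_ + _).
  rewrite big_ord_recl /= bin0 expr0 mulr1 scale1r addn0 -lpowS.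
  rewrite [in RHS]big_ord_recr /= bin_small // mul0r scale0r addr0; congr (_ + _); first by rewrite addn0.
  apply: eq_bigr => a _; rewrite (mZr HA) -lpowS /bump /=; congr (_ *: lpow _ _ _ _); lia.
rewrite scaler_sumr; apply: eq_bigr => a _.
rewrite (mZr HA) -(mA HA) -!lpowS scalerA add1n exprS; congr (_ *: lpow _ _ _ _).
  by rewrite mulrCA.
lia.
Qed.

Lemma rpowY (y : R) (l : K) i v : rpow mul (y + l *: mul y y) i v =
  \sum_(a < i.+1) ('C(i, a)%:R * l ^+ a) *: rpow mul y (i + a) v.
Proof.
elim: i v => [|i IH] v.
  by rewrite big_ord1 /= bin0 expr0 mulr1 scale1r.
rewrite rpowS IH (mDr HA) (mZr HA) !(m_suml HA).
rewrite [in RHS]big_ord_recl /= bin0 expr0 mulr1 scale1r.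
under [X in _ = _ + X]eq_bigr do rewrite /bump /= binS natrD mulrDl scalerDl.
rewrite big_split /= addrA; congr (_ + _).
  rewrite big_ord_recl /= bin0 expr0 mulr1 scale1r addn0 -rpowS.
  rewrite [in RHS]big_ord_recr /= bin_small // mul0r scale0r addr0; congr (_ + _); first by rewrite addn0.
  apply: eq_bigr => a _; rewrite (mZl HA) -rpowS /bump /=; congr (_ *: rpow _ _ _ _); lia.
rewrite scaler_sumr; apply: eq_bigr => a _.
rewrite (mZl HA) (mA HA) -!rpowS scalerA add1n exprS; congr (_ *: rpow _ _ _ _).
  by rewrite mulrCA.
lia.
Qed.

Definition Yof (y : R) (l : K) := y + l *: mul y y.

Lemma swY x y l i j N : (i < N)%N -> (j < N)%N -> sw mul x (Yof y l) i j =
  \sum_(b < N) \sum_(a < N) (('C(j, b)%:R * l ^+ b) * ('C(i, a)%:R * l ^+ a)) *: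
     sw mul x y (i + a) (j + b).
Proof.
move=> iN jN; rewrite /sw /Yof lpowY rpowY.
rewrite (@sum_widen _ (fun b => ('C(j, b)%:R * l ^+ b) *: rpow mul y (j + b)
   (\sum_(a < i.+1) ('C(i, a)%:R * l ^+ a) *: lpow mul y (i + a) x)) j.+1 N) //; last first.
  by move=> b jb _; rewrite bin_small // mulr0n mul0r scale0r.
apply: eq_bigr => b _; rewrite (rpow_sum HA) scaler_sumr.
rewrite (@sum_widen _ (fun a => ('C(j, b)%:R * l ^+ b) *:
   rpow mul y (j + b) (('C(i, a)%:R * l ^+ a) *: lpow mul y (i + a) x)) i.+1 N) //; last first.
  by move=> a ia _; rewrite (bin_small ia) mulr0n mul0r scale0r (rpow0 HA) scaler0.
by apply: eq_bigr => a _; rewrite (rpowZ HA) scalerA.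
Qed.

Lemma swLR x y A B i j : rpow mul y B (lpow mul y A (sw mul x y i j)) = sw mul x y (A + i) (B + j).
Proof. by rewrite /sw (lpow_rpow HA) -rpowD -lpowD. Qed.

End Eight.


Section Nine.
Variables (K : idomainType) (R : lmodType K) (mul : R -> R -> R) (p : nat).
Hypothesis HA : nu_assoc_alg mul.
Hypothesis Hinf : infinite_type K.
Hypothesis Htf : torsion_free R.
Hypothesis Hp : p \in [pchar K].

Lemma exch3 (F : nat -> nat -> nat -> R) n N M :
  \sum_(i < n) \sum_(a < N) \sum_(b < M) F i a b =
  \sum_(a < N) \sum_(b < M) \sum_(i < n) F i a b.
Proof.
rewrite exchange_big /=; apply: eq_bigr => a _; by rewrite exchange_big.
Qed.

Lemma diag_sum (F : nat -> nat -> R) N e : (e < N)%N ->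
  \sum_(a < N) \sum_(b < N) (((a + b)%N == e)%:R : K) *: F a b = \sum_(a < e.+1) F a (e - a)%N.
Proof.
move=> eN.
rewrite [RHS](eq_bigr (fun a : 'I_e.+1 => if (a <= e)%N then F a (e - a)%N else 0)); last first.
  by move=> a _; rewrite -ltnS ltn_ord.
rewrite (@sum_widen _ (fun a => if (a <= e)%N then F a (e - a)%N else 0) e.+1 N) //; last first.
  by move=> k ek _; rewrite leqNgt ek.
symmetry; apply: eq_bigr => a _; case: leqP => ae.
  rewrite (eq_bigr (fun b : 'I_N => if nat_of_ord b == (e - a)%N then F a b else 0)).
    by rewrite (big_delta (fun b => F a b)) //; lia.
  move=> b _; have -> : ((a + b)%N == e) = (nat_of_ord b == (e - a)%N) by apply/eqP/eqP; lia.
  by case: eqP => _; rewrite ?scale1r ?scale0r.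
by symmetry; apply: big1 => b _; rewrite (_ : ((a + b)%N == e) = false) ?scale0r //; apply/eqP; lia.
Qed.

Lemma VAN2 N (c : nat -> nat -> R) :
  (forall l : K, \sum_(a < N) \sum_(b < N) l ^+ (a + b) *: c a b = 0) ->
  forall k, (k < N + N)%N -> \sum_(a < N) \sum_(b < N) (((a + b)%N == k)%:R : K) *: c a b = 0.
Proof.
move=> H k kN.
pose C k := \sum_(a < N) \sum_(b < N) (((a + b)%N == k)%:R : K) *: c a b.
apply: (VAN Hinf Htf (N := (N + N)%N) (c := C)) => // l.
rewrite -[RHS](H l) /pev /C.
under eq_bigr do rewrite scaler_sumr.
rewrite exchange_big /=; apply: eq_bigr => a _.
under eq_bigr do rewrite scaler_sumr.
rewrite exchange_big /=; apply: eq_bigr => b _.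
rewrite (eq_bigr (fun k : 'I_(N + N) => if nat_of_ord k == (a + b)%N then l ^+ k *: c a b else 0)).
  by rewrite (big_delta (fun k => l ^+ k *: c a b)) //; have := ltn_ord a; have := ltn_ord b; lia.
move=> k' _; rewrite scalerA eq_sym; case: eqP => _; by rewrite ?mulr1 ?mulr0 ?scale0r.
Qed.

Lemma sign_sub (e a : nat) : (a <= e)%N -> (-1 : K) ^+ (e - a) = (-1) ^+ e * (-1) ^+ a.
Proof.
move=> ae; rewrite -{2}(subnK ae) exprD -mulrA -exprD addnn -mul2n exprM sqrrN expr1n.
by rewrite expr1n mulr1.
Qed.

Lemma core n (be : nat -> K) e :
  (e <= n)%N -> be e != 0 -> (forall i, (e < i)%N -> (i <= n)%N -> be i = 0) ->
  (forall x y : R, \sum_(i < n.+1) be i *: sw mul x y i (n - i)%N = 0) ->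
  Zp mul e e (p ^ n.+1)%N.-1.
Proof.
move=> en bne bz H.
have pr := pcharf_prime Hp.
set q := (p ^ n.+1)%N.
have nq : (n < q)%N by have := ltn_expl n.+1 (prime_gt1 pr); rewrite /q; lia.
set d := (e + q.-1)%N.
have Hd : forall x y : R, \sum_(i < n.+1) be i *: sw mul x y i (d - i)%N = 0.
  move=> x y; have E := congr1 (rpow mul y (d - n)%N) (H x y).
  rewrite (rpow0 HA) (rpow_sum HA) in E; rewrite -[RHS]E; apply: eq_bigr => i _.
  rewrite (rpowZ HA) /sw -rpowD; congr (_ *: rpow _ _ _ _); have := ltn_ord i; lia.
move=> x y.
set N := d.+1.
pose c a b := \sum_(i < n.+1) (be i * ('C(i, a)%:R * 'C((d - i)%N, b)%:R)) *:
   sw mul x y (i + a)%N ((d - i) + b)%N.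
have HL : forall l : K, \sum_(a < N) \sum_(b < N) l ^+ (a + b) *: c a b = 0.
  move=> l; rewrite -[RHS](Hd x (Yof mul y l)).
  have E : forall i : 'I_n.+1, be i *: sw mul x (Yof mul y l) i (d - i)%N =
     \sum_(a < N) \sum_(b < N) (l ^+ (a + b) * (be i * ('C(i, a)%:R * 'C((d - i)%N, b)%:R))) *:
        sw mul x y (i + a)%N ((d - i) + b)%N.
    move=> i; rewrite (swY HA x y l (N := N)); try (have := ltn_ord i; rewrite /N /d; lia).
    rewrite scaler_sumr; under eq_bigr do rewrite scaler_sumr.
    rewrite exchange_big /=; apply: eq_bigr => a _; apply: eq_bigr => b _.
    rewrite scalerA; congr (_ *: _); rewrite exprD; ring.
  rewrite (eq_bigr _ (fun i _ => E i)) (exch3 (fun i a b => (l ^+ (a + b) * (be i * ('C(i, a)%:R * 'C((d - i)%N, b)%:R))) *: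
        sw mul x y (i + a)%N ((d - i) + b)%N)); apply: eq_bigr => a _; apply: eq_bigr => b _.
  by rewrite /c scaler_sumr; apply: eq_bigr => i _; rewrite scalerA.
have Hc := VAN2 HL (_ : (e < N + N)%N).
have {Hc}Hc := Hc ltac:(rewrite /N /d; lia).
have eo : (e < n.+1)%N by lia.
have de : (d - e)%N = q.-1 by rewrite /d; lia.
have : \sum_(a < e.+1) (be e * ('C(e, a)%:R * 'C((d - e)%N, (e - a)%N)%:R)) *:
   sw mul x y (e + a)%N ((d - e) + (e - a))%N = 0.
  rewrite -[RHS]Hc.
  rewrite (eq_bigr (fun a : 'I_N => \sum_(b < N) \sum_(i < n.+1)
      ((((a + b)%N == e)%:R : K) * (be i * ('C(i, a)%:R * 'C((d - i)%N, b)%:R))) *: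
        sw mul x y (i + a)%N ((d - i) + b)%N)); last first.
    move=> a _; apply: eq_bigr => b _; rewrite /c scaler_sumr; apply: eq_bigr => i _.
    by rewrite scalerA.
  rewrite -(exch3 (fun i a b => ((((a + b)%N == e)%:R : K) * (be i * ('C(i, a)%:R * 'C((d - i)%N, b)%:R))) *:
        sw mul x y (i + a)%N ((d - i) + b)%N)).
  rewrite [RHS](bigD1 (Ordinal eo)) //= [X in _ = _ + X]big1 ?addr0; last first.
    move=> i /negPf ine; apply: big1 => a _; apply: big1 => b _.
    have ine' : (nat_of_ord i == e) = false by rewrite -ine -val_eqE.
    case: (ltngtP i e) => [ie|ei|ie']; last by rewrite ie' eqxx in ine'.
      case: eqP => [abe|]; last by rewrite mul0r scale0r.
      case: (leqP a i) => [ai|ia]; last by rewrite (bin_small ia) mulr0n mul0r mulr0 mulr0 scale0r.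
      have -> : (d - i)%N = ((p ^ n.+1).-1 + (e - i))%N by rewrite /d /q; have := ltn_ord i; lia.
      rewrite (@binq2 _ p Hp n.+1 (e - i)%N b) ?mulr0n ?mulr0 ?scale0r //; try lia.
    by rewrite bz ?mul0r ?mulr0 ?scale0r //; have := ltn_ord i; lia.
  rewrite -(@diag_sum (fun a b => (be e * ('C(e, a)%:R * 'C((d - e)%N, b)%:R)) *:
        sw mul x y (e + a)%N ((d - e) + b)%N) N e) //; last by rewrite /N /d; lia.
  by apply: eq_bigr => a _; apply: eq_bigr => b _; rewrite scalerA.
move=> Hs.
have : (be e * (-1) ^+ e) *: rpow mul y q.-1 (lpow mul y e (e_ mul x y e)) = 0.
  rewrite -[RHS]Hs (e_expand HA) (lpow_sum HA) (rpow_sum HA) scaler_sumr.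
  apply: eq_bigr => a _; rewrite (lpowZ HA) (rpowZ HA) swLR // scalerA de.
  have ae : (a <= e)%N by have := ltn_ord a; lia.
  rewrite (@binq1 _ p Hp n.+1 (e - a)%N); last by rewrite -/q; lia.
  rewrite sign_sub //; congr (_ *: _); ring.
case/Htf => // /eqP; rewrite mulf_eq0 (negPf bne) /= expf_eq0 oppr_eq0 oner_eq0 andbF //.
Qed.

End Nine.


Lemma iii_iv (K : idomainType) (R : lmodType K) (mul : R -> R -> R) (p : nat) :
  nu_assoc_alg mul -> infinite_type K -> torsion_free R -> p \in [pchar K] ->
  iii_prop mul -> exists m : nat, (1 <= m)%N /\
        forall x y : R, mul (mul (pw mul y m) (e_ mul x y m)) (pw mul y m) = 0.
Proof.
move=> HA Hinf Htf Hp [n [alpha [[i0 ai0] H]]].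
have pr := pcharf_prime Hp.
pose be k := alpha (inord k).
have Hb : forall x y : R, \sum_(i < n.+1) be i *: sw mul x y i (n - i)%N = 0.
  move=> x y; rewrite -[RHS](H x y); apply: eq_bigr => i _; by rewrite /be inord_val yxyE.
have exP : exists k, (k <= n)%N && (be k != 0).
  by exists i0; rewrite -ltnS ltn_ord /be inord_val.
have ubP : forall k, (k <= n)%N && (be k != 0) -> (k <= n)%N by move=> k /andP [].
case: (ex_maxnP exP ubP) => e /andP [en bne] emax.
have bz : forall i, (e < i)%N -> (i <= n)%N -> be i = 0.
  move=> i ei ni; apply/eqP; apply: contraTT ei => bi; rewrite -leqNgt; apply: emax.
  by rewrite ni bi.
have Z := core HA Hinf Htf Hp en bne bz Hb.
set q := (p ^ n.+1)%N in Z.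
have nq : (n < q)%N by have := ltn_expl n.+1 (prime_gt1 pr); rewrite /q; lia.
exists q; split; first lia.
apply/(iv_Zp HA); first lia.
apply: (Zp_mono HA Z); lia.
Qed.

Theorem theorem1p3 (K : idomainType) (R : lmodType K) (mul : R -> R -> R) :
  infinite_type K ->
  (exists p : nat, (0 < p)%N /\ p \in [pchar K]) ->
  nu_assoc_alg mul ->
  torsion_free R ->
  (semigroup_identity mul <-> binomial_identity mul)
  /\ (binomial_identity mul <->
      exists (n : nat) (alpha : 'I_n.+1 -> K),
        (exists i, alpha i != 0) /\
        forall x y : R, \sum_(i < n.+1) alpha i *: yxy mul x y n i = 0)
  /\ ((exists (n : nat) (alpha : 'I_n.+1 -> K),
        (exists i, alpha i != 0) /\
        forall x y : R, \sum_(i < n.+1) alpha i *: yxy mul x y n i = 0) <->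
      exists m : nat, (1 <= m)%N /\
        forall x y : R, mul (mul (pw mul y m) (e_ mul x y m)) (pw mul y m) = 0).
Proof.
move=> Hinf [p [_ Hp]] HA Htf.
have c12 : semigroup_identity mul -> binomial_identity mul by apply: i_ii.
have c23 : binomial_identity mul -> iii_prop mul := ii_iii HA Hinf Htf.
have c34 : iii_prop mul -> _ := iii_iv HA Hinf Htf Hp.
have c41 : (exists m : nat, (1 <= m)%N /\
        forall x y : R, mul (mul (pw mul y m) (e_ mul x y m)) (pw mul y m) = 0) ->
        semigroup_identity mul.
  by move=> [m [m1 H]]; apply: (iv_i HA Hp m1 H).
split; [split|split; split] => //.
- by move=> /c23 /c34 /c41.
- by move=> /c34 /c41 /c12.
- by move=> /c41 /c12 /c23.
Qed.
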